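(* Let $r\geq 0$ be an integer and, for each integer $n\geq 0$, let $D_r(n)$ denote the number of $r$-derangements of $n+r$ elements (equivalently, $D_r(n)$ is defined by the exponential generating function $\sum_{n\geq 0} D_r(n)\frac{x^n}{n!}=\frac{x^r e^{-x}}{(1-x)^{r+1}}$; in particular $D_r(n)=0$ for $n<r$ and $D_r(n)=\sum_{j=r}^{n}(-1)^{n-j}\binom{j}{r}\frac{n!}{(n-j)!}$ for $n\geq r$). Then for every integer $n\geq r$, \[ \sum_{k=0}^{n}\binom{n}{k}\,D_r(k)=n!\binom{n}{r}. \]
   Context: An $r$-derangement of $n+r$ elements is a permutation of $\{1,\dots,n+r\}$ with no fixed points (every cycle in its cycle decomposition has length at least $2$) in which the first $r$ elements $1,\dots,r$ all lie in distinct cycles. $D_r(n)$ denotes the number of such permutations, and its exponential generating function is $\sum_{n\geq 0} D_r(n)\frac{x^n}{n!}=\frac{x^r e^{-x}}{(1-x)^{r+1}}$. For $r=0$, $D_0(n)$ is the usual number of derangements of $n$ elements. *)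

(* Defs.v *)
From mathcomp Require Import all_boot all_order all_fingroup.
Set Implicit Arguments. Unset Strict Implicit. Unset Printing Implicit Defensive.

(* Elements {1,...,n+r} are modelled by 'I_(n+r) = {0,...,n+r-1};
   the "first r elements" are those with value < r. *)

Definition rderangement (r m : nat) (s : {perm 'I_m}) : bool :=
  [forall x : 'I_m, s x != x] &&
  [forall i : 'I_m, forall j : 'I_m,
     ((i < r) && (j < r) && (i != j)) ==> (j \notin porbit s i)].

Definition D (r n : nat) : nat :=
  #|[set s : {perm 'I_(n + r)} | rderangement r s]|.

(* Main.v *)
Require Import Defs.
From mathcomp Require Import all_boot all_order all_fingroup.
From mathcomp Require Import zify.
Set Implicit Arguments. Unset Strict Implicit. Unset Printing Implicit Defensive.

Definition ok m (sp nf : pred 'I_m) (s : {perm 'I_m}) : bool :=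
  [forall z, nf z ==> (s z != z)] &&
  [forall i, forall j, (sp i && sp j && (i != j)) ==> (j \notin porbit s i)].

Definition N m (sp nf : pred 'I_m) := #|[set s : {perm 'I_m} | ok sp nf s]|.

Lemma N_ext m (sp sp' nf nf' : pred 'I_m) : sp =1 sp' -> nf =1 nf' ->
  N sp nf = N sp' nf'.
Proof.
move=> H1 H2; apply: eq_card => s; rewrite !inE /ok.
congr (_ && _); apply: eq_forallb => i; first by rewrite H2.
by apply: eq_forallb => j; rewrite !H1.
Qed.

Lemma forall_lift m (i : 'I_m.+1) (P : pred 'I_m.+1) :
  [forall z, P z] = P i && [forall k, P (lift i k)].
Proof.
apply/forallP/andP => [H | [H1 /forallP H2] z]; first by split=> //; apply/forallP.
by case: (unliftP i z) => [k|] ->.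
Qed.

Section Iter.
Variable T : finType.
Lemma iter_perm_inj (u : {perm T}) k : injective (iter k u).
Proof. elim: k => [//|k IH] a b /= /perm_inj; exact: IH. Qed.

Lemma iter_fix (u : {perm T}) x k : u x = x -> iter k u x = x.
Proof. by move=> Hx; elim: k => //= k ->. Qed.

Lemma porbit_iter (s : {perm T}) a b :
  reflect (exists k, iter k s a = b) (b \in porbit s a).
Proof.
apply: (iffP (porbitP _ _ _)) => [[k ->]|[k <-]]; exists k; by rewrite permX.
Qed.

Lemma porbit_insert (u : {perm T}) x y a b : u x = x -> y != x ->
  a != x -> b != x ->
  (b \in porbit ((u * tperm x (u y))%g) a) = (b \in porbit u a).
Proof.
move=> ux yx ax bx; pose s : {perm T} := (u * tperm x (u y))%g; rewrite -/s.
have cx : u y != x by apply: contra yx => /eqP; rewrite -{1}ux => /perm_inj ->.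
have sE z : s z = tperm x (u y) (u z) by rewrite permM.
have sx : s x = u y by rewrite sE ux tpermL.
have sy : s y = x by rewrite sE tpermR.
have sz z : z != x -> z != y -> s z = u z.
  move=> zx zy; rewrite sE tpermD //.
    apply: contra zx => /eqP H; apply/eqP; apply: (@perm_inj _ u); by rewrite ux.
  apply: contra zy => /eqP H; apply/eqP; exact: (@perm_inj _ u).
have itx k : iter k u a != x.
  apply: contra ax => /eqP H; apply/eqP; apply: (@iter_perm_inj u k).
  by rewrite H iter_fix.
apply/porbit_iter/porbit_iter => [[k Hk]|[k Hk]].
- have: exists k', iter k s a = iter k' u a \/
          (iter k s a = x /\ iter k' u a = y).
    elim: k {Hk} => [|k [k' [H|[H1 H2]]]]; first by exists 0; left.
    + have [wy|wy] := eqVneq (iter k' u a) y.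
        by exists k'; right; split=> //=; rewrite H wy.
      by exists k'.+1; left; rewrite /= H sz.
    + by exists k'.+1; left; rewrite /= H1 sx H2.
  case=> k' [H|[H1 _]]; last by move: bx; rewrite -Hk H1 eqxx.
  by exists k'; rewrite -H.
- suff: exists k', iter k' s a = iter k u a by case=> k' H; exists k'; rewrite H.
  elim: k {Hk} => [|k [k' H]]; first by exists 0.
  have [wy|wy] := eqVneq (iter k u a) y.
    by exists k'.+2; rewrite /= H wy sy sx.
  by exists k'.+1; rewrite /= H sz.
Qed.
End Iter.

Section Lift.
Variable m : nat.
Implicit Types (i : 'I_m.+1) (s : {perm 'I_m}).

Lemma iter_lift i s k a :
  iter k (lift_perm i i s) (lift i a) = lift i (iter k s a).
Proof. by elim: k => //= k ->; rewrite lift_perm_lift. Qed.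

Lemma porbit_lift i s a b :
  (lift i b \in porbit (lift_perm i i s) (lift i a)) = (b \in porbit s a).
Proof.
apply/porbit_iter/porbit_iter => [[k]|[k <-]].
  by rewrite iter_lift => /lift_inj <-; exists k.
by exists k; rewrite iter_lift.
Qed.

Lemma porbit_lift_i i s a : (i \in porbit (lift_perm i i s) (lift i a)) = false.
Proof.
apply/porbit_iter => -[k]; rewrite iter_lift => /eqP; by rewrite eq_sym (negbTE (neq_lift _ _)).
Qed.

Lemma porbit_i_lift i s b : (lift i b \in porbit (lift_perm i i s) i) = false.
Proof.
apply/porbit_iter => -[k]; rewrite iter_fix ?lift_perm_id // => /eqP.
by rewrite (negbTE (neq_lift _ _)).
Qed.

Lemma ok_lift i (sp nf : pred 'I_m.+1) s : ~~ nf i ->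
  ok sp nf (lift_perm i i s) = ok (fun k => sp (lift i k)) (fun k => nf (lift i k)) s.
Proof.
move=> nfi; rewrite /ok (forall_lift i) (negbTE nfi) /=.
congr (_ && _).
  by apply: eq_forallb => k; rewrite lift_perm_lift (inj_eq (@lift_inj _ i)).
rewrite (forall_lift i) (forall_lift i) eqxx andbF /=.
rewrite [X in X && _](_ : _ = true) ?andTb; last first.
  by apply/forallP => k; rewrite porbit_i_lift implybT.
apply: eq_forallb => a; rewrite (forall_lift i) porbit_lift_i /= implybT andTb.
apply: eq_forallb => b; by rewrite porbit_lift (inj_eq (@lift_inj _ i)).
Qed.
End Lift.

Section Lift2.
Variable m : nat.
Implicit Types (i : 'I_m.+1) (s : {perm 'I_m}).

Lemma lift_perm_inj i : injective (@lift_perm m i i).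
Proof.
move=> s1 s2 H; apply/permP => k; apply: (@lift_inj _ i).
by rewrite -(lift_perm_lift i i s1) -(lift_perm_lift i i s2) H.
Qed.

Lemma lift_perm_surj i (t : {perm 'I_m.+1}) : t i = i ->
  exists s, t = lift_perm i i s.
Proof.
move=> ti.
have ne k : t (lift i k) != i.
  apply: contraNneq (neq_lift i k) => H; apply/eqP; apply: (@perm_inj _ t).
  by rewrite ti H.
pose f k := odflt k (unlift i (t (lift i k))).
have fE k : lift i (f k) = t (lift i k).
  rewrite /f; case: (unliftP i (t (lift i k))) => [j ->|E] /=; first by [].
  by move: (ne k); rewrite E eqxx.
have finj : injective f.
  by move=> a b H; apply: (@lift_inj _ i); apply: (@perm_inj _ t); rewrite -!fE H.
exists (perm finj); apply/permP => z; case: (unliftP i z) => [k|] ->.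
  by rewrite lift_perm_lift permE fE.
by rewrite lift_perm_id.
Qed.

Lemma card_fix i (sp nf : pred 'I_m.+1) : ~~ nf i ->
  #|[set t : {perm 'I_m.+1} | (t i == i) && ok sp nf t]| =
  N (fun k => sp (lift i k)) (fun k => nf (lift i k)).
Proof.
move=> nfi; rewrite /N -(card_imset _ (@lift_perm_inj i)); apply: eq_card => t.
rewrite inE; apply/andP/imsetP => [[/eqP ti okt]|[s]].
  have [s E] := lift_perm_surj ti; exists s => //.
  by rewrite inE -(ok_lift _ _ nfi) -E.
by rewrite inE => oks ->; rewrite lift_perm_id eqxx ok_lift.
Qed.

Definition Fi i (p : {perm 'I_m} * 'I_m) : {perm 'I_m.+1} :=
  (lift_perm i i p.1 * tperm i (lift i (p.1 p.2)))%g.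

Lemma Fi_i i p : Fi i p i = lift i (p.1 p.2).
Proof. by rewrite /Fi permM lift_perm_id tpermL. Qed.

Lemma Fi_y i p : Fi i p (lift i p.2) = i.
Proof. by rewrite /Fi permM lift_perm_lift tpermR. Qed.

Lemma Fi_z i p k : k != p.2 -> Fi i p (lift i k) = lift i (p.1 k).
Proof.
move=> kn; rewrite /Fi permM lift_perm_lift tpermD //.
  by rewrite neq_lift.
by rewrite (inj_eq (@lift_inj _ i)) (inj_eq perm_inj) eq_sym.
Qed.

Lemma Fi_inj i : injective (Fi i).
Proof.
move=> [s1 y1] [s2 y2] H.
have ey : y1 = y2.
  apply: (@lift_inj _ i); apply: (@perm_inj _ (Fi i (s1, y1))).
  by rewrite Fi_y H Fi_y.
subst y2; congr (_, _); apply/permP => k.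
have [->|kn] := eqVneq k y1.
  by apply: (@lift_inj _ i); move: (Fi_i i (s1, y1)); rewrite H Fi_i.
apply: (@lift_inj _ i); move: (@Fi_z i (s1, y1) k kn); rewrite H Fi_z //=.
Qed.

Lemma ok_Fi i (sp nf : pred 'I_m.+1) p : ~~ sp i ->
  ok sp nf (Fi i p) = ok (fun k => sp (lift i k)) (fun k => nf (lift i k) && (k != p.2)) p.1.
Proof.
move=> spi.
have liftE (a b : 'I_m) : (lift i a == lift i b) = (a == b) := inj_eq (@lift_inj _ i) a b.
rewrite /ok (forall_lift i) Fi_i eq_sym neq_lift implybT andTb.
congr (_ && _).
  apply: eq_forallb => k; have [->|kn] := eqVneq k p.2.
    by rewrite Fi_y neq_lift andbF implybT.
  by rewrite Fi_z // liftE andbT.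
rewrite (forall_lift i) (negbTE spi) /=.
rewrite [X in X && _](_ : _ = true) ?andTb; last by apply/forallP.
apply: eq_forallb => a.
rewrite (forall_lift i) (negbTE spi) andbF /=; apply: eq_forallb => b.
rewrite liftE; case: (sp _ && _ && _) => //=.
rewrite /Fi -(lift_perm_lift i i p.1 p.2) porbit_insert ?lift_perm_id //; last 3 first.
- by rewrite eq_sym neq_lift.
- by rewrite eq_sym neq_lift.
- by rewrite eq_sym neq_lift.
by rewrite (porbit_lift i p.1 a b).
Qed.

Lemma Fi_surj i (t : {perm 'I_m.+1}) : t i != i -> exists p, t = Fi i p.
Proof.
move=> ti.
pose u := (t * tperm i (t i))%g.
have ui : u i = i by rewrite permM tpermR.
have [s0 E] := lift_perm_surj ui.
have tii : (t^-1)%g i != i.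
  by apply: contra ti => /eqP H; rewrite -{1}H permKV.
have [y Ey] : exists y, (t^-1)%g i = lift i y.
  case: (unliftP i ((t^-1)%g i)) => [y ->|E']; first by exists y.
  by move: tii; rewrite E' eqxx.
exists (s0, y); rewrite /Fi /= -E.
have -> : lift i (s0 y) = t i.
  by rewrite -(lift_perm_lift i i s0 y) -E /u permM -Ey permKV tpermL.
by rewrite /u -mulgA tperm2 mulg1.
Qed.

Lemma card_nonfix i (sp nf : pred 'I_m.+1) : ~~ sp i ->
  #|[set t : {perm 'I_m.+1} | (t i != i) && ok sp nf t]| =
  \sum_(y : 'I_m) N (fun k => sp (lift i k)) (fun k => nf (lift i k) && (k != y)).
Proof.
move=> spi.
have -> : [set t : {perm 'I_m.+1} | (t i != i) && ok sp nf t] =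
   Fi i @: [set p | ok (fun k => sp (lift i k)) (fun k => nf (lift i k) && (k != p.2)) p.1].
  apply/setP => t; rewrite inE; apply/andP/imsetP => [[ti okt]|[p]].
    have [p E] := Fi_surj ti; exists p => //; by rewrite inE -ok_Fi // -E.
  rewrite inE => okp ->; rewrite Fi_i eq_sym neq_lift ok_Fi //.
rewrite (card_imset _ (@Fi_inj i)) -sum1_card big_mkcond /=.
transitivity (\sum_(s : {perm 'I_m}) \sum_(y : 'I_m)
   (if ok (fun k => sp (lift i k)) (fun k => nf (lift i k) && (k != y)) s then 1 else 0)).
  rewrite pair_big /=; apply: eq_big => // -[s y] _; by rewrite inE.
rewrite exchange_big /=; apply: eq_bigr => y _.
rewrite /N -sum1_card [RHS]big_mkcond /=; apply: eq_bigr => s _; by rewrite !inE.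
Qed.
End Lift2.

Lemma N_split m (sp nf : pred 'I_m) (i : 'I_m) :
  N sp nf = #|[set s : {perm 'I_m} | (s i == i) && ok sp nf s]| +
            #|[set s : {perm 'I_m} | (s i != i) && ok sp nf s]|.
Proof.
rewrite /N -(cardsID [set s : {perm 'I_m} | s i == i]); congr (_ + _); apply: eq_card => s;
  by rewrite !inE andbC.
Qed.



Lemma ok_add m (sp nf nf' : pred 'I_m) (i : 'I_m) s :
  (forall z, nf' z = nf z || (z == i)) -> ok sp nf' s = (s i != i) && ok sp nf s.
Proof.
move=> H; rewrite /ok andbA; congr (_ && _).
apply/forallP/andP => [Hf|[Hi /forallP Hf] z].
  split; first by move: (Hf i); rewrite H eqxx orbT.
  by apply/forallP => z; move: (Hf z); rewrite H; case: (nf z).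
rewrite H; apply/implyP => /orP [nz|/eqP ->] //.
exact: (implyP (Hf z)).
Qed.

Definition A m r t := N (fun z : 'I_m => z < r) (fun z : 'I_m => z < t).

Lemma liftv n (i : 'I_n.+1) (k : 'I_n) : (lift i k : nat) = k + (i <= k).
Proof. by rewrite /= /bump addnC. Qed.

Lemma R1 m r t : r <= t -> t <= m -> A m.+1 r t = A m.+1 r t.+1 + A m r t.
Proof.
move=> rt tm; have tm1 : t < m.+1 by [].
pose i := Ordinal tm1.
rewrite /A (N_split _ _ i) addnC; congr (_ + _).
  apply: eq_card => s; rewrite !inE (@ok_add _ _ (fun z : 'I_m.+1 => z < t) (fun z : 'I_m.+1 => z < t.+1) i) //.
  by move=> z; rewrite ltnS leq_eqVlt orbC -val_eqE.
rewrite card_fix /=; last by rewrite ltnn.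
by apply: N_ext => k /=; rewrite /bump; case: (leqP t k) => /=; lia.
Qed.

Lemma per_y m r (y : 'I_m) : y < r ->
  N (fun z : 'I_m => z < r) (fun z => (z < r) && (z != y)) =
  A m r r + A m.-1 r.-1 r.-1.
Proof.
move=> yr; rewrite (N_split _ _ y) addnC; congr (_ + _).
  apply: eq_card => s; rewrite !inE (@ok_add _ _ (fun z : 'I_m => (z < r) && (z != y)) (fun z : 'I_m => z < r) y) //.
  move=> z; have [->|] := eqVneq z y; first by rewrite yr orbT.
  by rewrite andbT orbF.
case: m y yr => [[//]|m] y yr.
rewrite card_fix /=; last by rewrite eqxx andbF.
apply: N_ext => k /=.
  rewrite /bump; case: (leqP y k) => /=; lia.
rewrite (eq_sym (lift _ _)) (negbTE (neq_lift _ _)) andbT.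
rewrite /bump; case: (leqP y k) => /=; lia.
Qed.

Lemma bump_max m (k : 'I_m) : bump m k = k.
Proof. by rewrite /bump leqNgt ltn_ord. Qed.

Lemma R2 m r : r <= m -> A m.+1 r r = m.+1 * A m r r + r * A m.-1 r.-1 r.-1.
Proof.
move=> rm; rewrite /A (N_split _ _ ord_max).
rewrite card_fix /=; last by rewrite ltnNge rm.
rewrite card_nonfix /=; last by rewrite ltnNge rm.
rewrite (@N_ext _ _ (fun z : 'I_m => z < r) _ (fun z : 'I_m => z < r)); try by move=> k /=; rewrite bump_max.
rewrite -/(A m r r) -/(A m.-1 r.-1 r.-1) mulSn -addnA; congr (_ + _).
transitivity (\sum_(y : 'I_m) (A m r r + (if y < r then A m.-1 r.-1 r.-1 else 0))).
  apply: eq_bigr => y _.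
  rewrite (@N_ext _ _ (fun z : 'I_m => z < r) _ (fun z : 'I_m => (z < r) && (z != y))); try by move=> k /=; rewrite bump_max.
  case: ifP => yr; first exact: per_y.
  rewrite addn0; apply: N_ext => // k; have [->|] := eqVneq k y; first by rewrite yr.
  by rewrite andbT.
rewrite big_split /= sum_nat_const card_ord; congr (_ + _).
rewrite -big_mkcond /= -(big_ord_widen_cond _ (fun _ => true) (fun _ => A m.-1 r.-1 r.-1) rm) /=.
by rewrite sum_nat_const card_ord.
Qed.

Lemma A_base r : A r r r = (r == 0).
Proof.
case: r => [|r].
  rewrite /A /N /=; transitivity #|{perm 'I_0}|.
    by apply: eq_card => s; rewrite !inE /ok; apply/andP; split; apply/forallP => -[].
  by rewrite card_Sn.
rewrite /A /N /=; apply/eqP; rewrite cards_eq0; apply/eqP/setP => s; rewrite !inE.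
apply/negbTE; rewrite /ok negb_and; pose z : 'I_r.+1 := ord0.
have [sz|sz] := eqVneq (s z) z.
  by apply/orP; left; rewrite negb_forall; apply/existsP; exists z; rewrite sz eqxx.
apply/orP; right; rewrite negb_forall; apply/existsP; exists z.
rewrite negb_forall; apply/existsP; exists (s z).
rewrite !ltn_ord eq_sym sz /= negbK; apply/porbit_iter; by exists 1.
Qed.

Lemma A_closed n r : A (n + r) r r = n`! * 'C(n, r).
Proof.
elim: n r => [|n IH] r; first by rewrite A_base; case: r.
rewrite addSn R2 ?leq_addl // IH.
case: r => [|r]; first by rewrite !bin0 mul0n addn0 addn0 !muln1 factS.
rewrite addnS /= IH factS binS.
have H := mul_bin_left n r.
have [rn|nr] := leqP r n.
  rewrite mulnDr; set X := 'C(n, r.+1) in H *; set Y := 'C(n, r) in H *.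
  set F := n`!.
  have E : n.+1 * Y = r.+1 * X + r.+1 * Y by rewrite H -mulnDl; congr (_ * _); lia.
  nia.
have X0 : 'C(n, r.+1) = 0 by rewrite bin_small //; lia.
have Y0 : 'C(n, r) = 0 by rewrite bin_small.
by rewrite X0 Y0 !muln0.
Qed.

Lemma D_A r k : D r k = A (k + r) r (k + r).
Proof.
rewrite /D /A /N; apply: eq_card => s; rewrite !inE /rderangement /ok.
congr (_ && _); apply: eq_forallb => z; by rewrite ltn_ord.
Qed.

Lemma P_sum r j n : j <= n ->
  A (n + r) r (n + r - j) = \sum_(i < j.+1) 'C(j, i) * D r (n - i).
Proof.
elim: j n => [|j IH] n jn.
  by rewrite subn0 big_ord_recl big_ord0 bin0 subn0 mul1n addn0 D_A.
case: n jn => [//|n] jn.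
have -> : n.+1 + r = (n + r).+1 by lia.
have -> : (n + r).+1 - j.+1 = n + r - j by lia.
rewrite R1; [|lia|lia].
have -> : (n + r - j).+1 = n.+1 + r - j by lia.
have -> : (n + r).+1 = n.+1 + r by lia.
rewrite IH ?(ltnW jn) // IH //.
have L1 : \sum_(i < j.+1) 'C(j, i) * D r (n.+1 - i) =
   D r n.+1 + \sum_(i < j) 'C(j, i.+1) * D r (n - i).
  by rewrite big_ord_recl bin0 subn0 mul1n.
have L2 : \sum_(i < j.+2) 'C(j.+1, i) * D r (n.+1 - i) =
   D r n.+1 + (\sum_(i < j.+1) 'C(j, i.+1) * D r (n - i) +
               \sum_(i < j.+1) 'C(j, i) * D r (n - i)).
  rewrite big_ord_recl bin0 subn0 mul1n; congr (_ + _); rewrite -big_split.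
  by apply: eq_bigr => i _; rewrite /bump /= ?add1n subSS binS mulnDl.
have L3 : \sum_(i < j.+1) 'C(j, i.+1) * D r (n - i) =
   \sum_(i < j) 'C(j, i.+1) * D r (n - i).
  by rewrite big_ord_recr /= bin_small // mul0n addn0.
by rewrite L1 L2 L3 addnA.
Qed.

Theorem mainTheorem1 (r n : nat) (hrn : r <= n) :
  \sum_(k < n.+1) 'C(n, k) * D r k = n`! * 'C(n, r).
Proof.
rewrite -A_closed; have := P_sum r (leqnn n); rewrite addKn => ->.
rewrite (reindex_inj rev_ord_inj) /=; apply: eq_bigr => i _.
rewrite subSS bin_sub ?subKn //; rewrite -ltnS; exact: ltn_ord.
Qed.
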